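(* Consider the random-field Ising model: $E=\{-1,+1\}$, $E'=\{h_1,\dots,h_L\}\subset\mathbb R$ finite with $L\ge 2$, $\alpha[h](\sigma)=\frac{e^{h\sigma}}{2\cosh h}$ for $h\in E'$, $\sigma\in E$, $\pi\in\mathcal P(E')$ with $\pi(h)>0$ for all $h\in E'$, and $F(\nu)=G(\nu(+1)-\nu(-1))$ where $G:[-1,1]\to\mathbb R$ is twice continuously differentiable with $G'$ injective. Then the non-degeneracy condition 2) holds automatically: any two distinct minimizers $\hat\nu\neq\hat\nu'$ of $\Phi[\pi]$ on $\mathcal P(E)^{E'}$ have distinct stability vectors $B_{\hat\nu}\neq B_{\hat\nu'}$.
   Context: Free energy: $\Phi[\pi](\hat\nu)=F(\sum_h\pi(h)\hat\nu(h))+\sum_h\pi(h)S(\hat\nu(h)|\alpha[h])$ for $\hat\nu=(\hat\nu(h))_{h\in E'}\in\mathcal P(E)^{E'}$, $S(p|q)=\sum_a p(a)\log(p(a)/q(a))$. Write $\pi\cdot\hat\nu=\sum_h\pi(h)\hat\nu(h)$. For a minimizer $\hat\nu$, the stability vector $B_{\hat\nu}\in T\mathcal P(E')=\{x\in\mathbb R^{E'}:\sum_hx(h)=0\}$ is the vector with $\langle x,B_{\hat\nu}\rangle=-\big(dF_{\pi\cdot\hat\nu}(\sum_hx(h)\hat\nu(h))+\sum_hx(h)S(\hat\nu(h)|\alpha[h])\big)$ for all $x\in T\mathcal P(E')$, where $dF_\nu$ is the differential of $F$ on the tangent space $\{y\in\mathbb R^E:\sum y=0\}$ of the simplex $\mathcal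 P(E)$. *)

(* Defs.v *)
From HB Require Import structures.
From mathcomp Require Import all_boot all_order all_algebra.
From mathcomp Require Import all_classical all_reals all_analysis.
Set Implicit Arguments. Unset Strict Implicit. Unset Printing Implicit Defensive.
Import Order.TTheory GRing.Theory Num.Theory.
Import numFieldNormedType.Exports.
Local Open Scope classical_set_scope.
Local Open Scope ring_scope.

(* Random-field Ising model.  E = {-1,+1} is encoded as bool (true = +1).
   E' = {h_1,...,h_L} is encoded by an injective map h : 'I_L -> R. *)

Section RFIM.
Variable R : realType.

Definition spin (s : bool) : R := if s then 1 else -1.

Definition alpha (hh : R) (s : bool) : R :=
  expR (hh * spin s) / (expR hh + expR (- hh)).

(* relative entropy S(p|q) = sum_a p(a) log (p(a)/q(a)) (0 log 0 = 0 since ln 0 = 0) *)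
Definition relent (p q : bool -> R) : R :=
  \sum_(a : bool) p a * ln (p a / q a).

Definition is_prob (T : finType) (p : T -> R) : Prop :=
  (forall t, 0 <= p t) /\ \sum_(t : T) p t = 1.

Definition is_config (L : nat) (nu : 'I_L -> bool -> R) : Prop :=
  forall i, is_prob (nu i).

Definition mixt (L : nat) (pi : 'I_L -> R) (nu : 'I_L -> bool -> R) : bool -> R :=
  fun a => \sum_(i < L) pi i * nu i a.

Definition FIsing (G : R -> R) (nu : bool -> R) : R := G (nu true - nu false).

Definition dFIsing (G' : R -> R) (nu : bool -> R) (y : bool -> R) : R :=
  G' (nu true - nu false) * (y true - y false).

Definition Phi (L : nat) (G : R -> R) (h : 'I_L -> R) (pi : 'I_L -> R)
  (nu : 'I_L -> bool -> R) : R :=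
  FIsing G (mixt pi nu) + \sum_(i < L) pi i * relent (nu i) (alpha (h i)).

Definition is_minimizer (L : nat) (G : R -> R) (h : 'I_L -> R) (pi : 'I_L -> R)
  (nu : 'I_L -> bool -> R) : Prop :=
  is_config nu /\
  forall nu' : 'I_L -> bool -> R, is_config nu' -> Phi G h pi nu <= Phi G h pi nu'.

Definition is_stability_vector (L : nat) (G' : R -> R) (h : 'I_L -> R)
  (pi : 'I_L -> R) (nu : 'I_L -> bool -> R) (B : 'I_L -> R) : Prop :=
  \sum_(i < L) B i = 0 /\
  forall x : 'I_L -> R, \sum_(i < L) x i = 0 ->
    \sum_(i < L) x i * B i =
      - (dFIsing G' (mixt pi nu) (fun a => \sum_(i < L) x i * nu i a)
         + \sum_(i < L) x i * relent (nu i) (alpha (h i))).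

Definition deriv_within (I : set R) (f : R -> R) (x l : R) : Prop :=
  (fun y => (f y - f x) / (y - x)) @ within I (x^') --> l.

Definition closed_unit_interval : set R := [set x | -1 <= x <= 1].

Definition C2_on (I : set R) (G G1 G2 : R -> R) : Prop :=
  (forall x, I x -> deriv_within I G x (G1 x) /\ deriv_within I G1 x (G2 x))
  /\ {within I, continuous G2}.

End RFIM.

(* Main.v *)
Require Import Defs.
From HB Require Import structures.
From mathcomp Require Import all_boot all_order all_algebra.
From mathcomp Require Import all_classical all_reals all_analysis.
From mathcomp Require Import ring lra.
Import Order.TTheory GRing.Theory Num.Theory.
Import numFieldNormedType.Exports.
Local Open Scope classical_set_scope.
Local Open Scope ring_scope.

Section S.
Variable R : realType.

Lemma ln_le_sub1 (u : R) : 0 < u -> ln u <= u - 1.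
Proof.
move=> u0; have := @le_ln1Dx R (u - 1).
have -> : 1 + (u - 1) = u by lra.
apply; lra.
Qed.

Lemma ln_lt_sub1 (u : R) : 0 < u -> u != 1 -> ln u < u - 1.
Proof.
move=> u0 u1.
have hx : ln u != 0.
  apply/eqP => h0; move/eqP: u1; apply.
  by rewrite -(lnK (x:=u)) ?posrE // h0 expR0.
have := expR_gt1Dx hx; rewrite lnK ?posrE //; lra.
Qed.

Lemma tangent (y z c : R) : 0 <= y -> 0 < z -> 0 < c ->
  y * ln (z / c) + y - z <= y * ln (y / c).
Proof.
move=> y0 z0 c0.
have [->|yp] := eqVneq y 0; first by rewrite !mul0r; lra.
have y0' : 0 < y by rewrite lt0r yp.
have e : z / c = (z / y) * (y / c) by field; apply/andP; split; apply: lt0r_neq0.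
rewrite e lnM ?posrE ?divr_gt0 //.
have := ln_le_sub1 _ (divr_gt0 z0 y0').
move=> H.
have H2 : y * ln (z / y) <= y * (z / y - 1) by rewrite ler_wpM2l.
have e2 : y * (z / y - 1) = z - y by field; apply: lt0r_neq0.
rewrite mulrDr; lra.
Qed.

Lemma tangent_strict (y c : R) : 0 <= y -> 0 < c -> y != c ->
  y - c < y * ln (y / c).
Proof.
move=> y0 c0 yc.
have [->|yp] := eqVneq y 0; first by rewrite !mul0r; lra.
have y0' : 0 < y by rewrite lt0r yp.
have e : y / c = (c / y)^-1 by rewrite invf_div.
have H := ln_lt_sub1 _ (divr_gt0 c0 y0').
have cy : c / y != 1.
  apply/eqP => h; move/eqP: yc; apply.
  by have := f_equal (fun t => t * y) h; rewrite mul1r mulfVK // => ->.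
move: (H cy) => {}H.
rewrite e lnV ?posrE ?divr_gt0 //.
have H2 : y * ln (c / y) < y * (c / y - 1) by rewrite ltr_pM2l.
have e2 : y * (c / y - 1) = c - y by field.
lra.
Qed.

Lemma term_convex (a c t : R) : 0 <= a -> 0 < c -> 0 < t -> t <= 1 ->
  ((1 - t) * a + t * c) * ln (((1 - t) * a + t * c) / c) <= (1 - t) * (a * ln (a / c)).
Proof.
move=> a0 c0 t0 t1.
set z := (1 - t) * a + t * c.
have z0 : 0 < z.
  rewrite /z; have : 0 <= (1 - t) * a by apply: mulr_ge0 => //; lra.
  have : 0 < t * c by apply: mulr_gt0.
  lra.
have T1 := tangent _ _ _ a0 z0 c0.
have T2 := tangent _ _ _ (ltW c0) z0 c0.
rewrite divff ?lt0r_neq0 // ln1 mulr0 in T2.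
have T1' : (1 - t) * (a * ln (z / c) + a - z) <= (1 - t) * (a * ln (a / c)).
  by rewrite ler_wpM2l //; lra.
have T2' : t * (c * ln (z / c) + c - z) <= 0.
  apply: mulr_ge0_le0; lra.
have -> : z * ln (z / c) = (1 - t) * (a * ln (z / c) + a - z) + t * (c * ln (z / c) + c - z).
  rewrite /z; ring.
lra.
Qed.


Implicit Types hh g : R.
Definition Zf (hh g : R) : R := \sum_(s : bool) alpha hh s * expR (- (g * spin R s)).
Definition gibbs (hh g : R) (s : bool) : R := alpha hh s * expR (- (g * spin R s)) / Zf hh g.

Lemma alpha_gt0 hh s : 0 < alpha hh s.
Proof. by rewrite /alpha divr_gt0 ?addr_gt0 ?expR_gt0. Qed.

Lemma Zf_gt0 hh g : 0 < Zf hh g.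
Proof. by rewrite /Zf big_bool /= addr_gt0 // mulr_gt0 ?alpha_gt0 ?expR_gt0. Qed.

Lemma gibbs_gt0 hh g s : 0 < gibbs hh g s.
Proof. by rewrite /gibbs divr_gt0 ?Zf_gt0 // mulr_gt0 ?alpha_gt0 ?expR_gt0. Qed.

Lemma gibbs_prob hh g : is_prob (gibbs hh g).
Proof.
split; first by move=> t; apply: ltW; apply: gibbs_gt0.
rewrite /gibbs -mulr_suml -/(Zf hh g) divff //; apply: lt0r_neq0; exact: Zf_gt0.
Qed.

Lemma relent_ge0 (p q : bool -> R) : is_prob p -> is_prob q -> (forall a, 0 < q a) ->
  0 <= relent p q.
Proof.
move=> [p0 p1] [q0 q1] qp.
have : \sum_(a : bool) (p a - q a) <= relent p q.
  rewrite /relent; apply: ler_sum => a _.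
  have := tangent _ _ _ (p0 a) (qp a) (qp a).
  by rewrite divff ?lt0r_neq0 // ln1 mulr0 add0r.
by rewrite sumrB p1 q1 subrr.
Qed.

Lemma relent_eq0 (p q : bool -> R) : is_prob p -> is_prob q -> (forall a, 0 < q a) ->
  relent p q = 0 -> p = q.
Proof.
move=> [p0 p1] [q0 q1] qp H.
apply: funext => a; apply/eqP; apply/negPn/negP => ne.
have T := fun b => tangent _ _ _ (p0 b) (qp b) (qp b).
have S := fun b => tangent_strict _ _ (p0 b) (qp b).
move: p1 q1 H T S; rewrite /relent !big_bool /= => p1 q1 H T S.
move: (T true) (T false).
rewrite !divff ?lt0r_neq0 // !ln1 !mulr0 !add0r => Tt Tf.
case: a ne => ne.
  have := S true ne; lra.
have := S false ne; lra.
Qed.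

Lemma relent_self (q : bool -> R) : (forall a, 0 < q a) -> relent q q = 0.
Proof.
move=> qp; rewrite /relent big1 // => a _.
by rewrite divff ?lt0r_neq0 // ln1 mulr0.
Qed.

Lemma relent_gibbs (p : bool -> R) hh g : is_prob p ->
  relent p (alpha hh) + g * (p true - p false) = relent p (gibbs hh g) - ln (Zf hh g).
Proof.
move=> [p0 p1].
have key : forall a, p a * ln (p a / alpha hh a) + g * spin R a * p a =
    p a * ln (p a / gibbs hh g a) - p a * ln (Zf hh g).
  move=> a.
  have [->|pn] := eqVneq (p a) 0; first by rewrite !(mul0r, mulr0) subrr addr0.
  have pp : 0 < p a by rewrite lt0r pn p0.
  have al := alpha_gt0 hh a; have Zp := Zf_gt0 hh g.
  have ex := expR_gt0 (g * spin R a).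
  have e : p a / gibbs hh g a = (p a / alpha hh a) * (Zf hh g * expR (g * spin R a)).
    rewrite /gibbs expRN; field.
    by rewrite !lt0r_neq0.
  have l2 : ln (Zf hh g * expR (g * spin R a)) = ln (Zf hh g) + g * spin R a.
    by rewrite lnM ?posrE // expRK.
  have l1 : ln (p a / alpha hh a * (Zf hh g * expR (g * spin R a))) =
     ln (p a / alpha hh a) + ln (Zf hh g * expR (g * spin R a)).
    by rewrite lnM // posrE; [apply: divr_gt0 | apply: mulr_gt0].
  rewrite e l1 l2; ring.
have -> : relent p (gibbs hh g) - ln (Zf hh g) =
    \sum_(a : bool) (p a * ln (p a / gibbs hh g a) - p a * ln (Zf hh g)).
  by rewrite sumrB -mulr_suml p1 mul1r.
rewrite -(eq_bigr _ (fun a _ => key a)) big_split /= /relent.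
congr (_ + _); rewrite big_bool /spin /=; ring.
Qed.

Lemma relent_convex (p q : bool -> R) t : is_prob p -> (forall a, 0 < q a) -> 0 < t -> t <= 1 ->
  relent (fun a => (1 - t) * p a + t * q a) q <= (1 - t) * relent p q.
Proof.
move=> [p0 _] qp t0 t1; rewrite /relent mulr_sumr; apply: ler_sum => a _.
exact: term_convex.
Qed.

Lemma deriv_eps (I : set R) f x l : deriv_within I f x l ->
  forall e : R, 0 < e -> exists2 d : R, 0 < d & forall y, I y -> y != x -> `|y - x| < d ->
   `|(f y - f x) / (y - x) - l| < e.
Proof.
move=> H e e0.
move/cvgrPdist_lt: H => /(_ e e0).
rewrite near_withinE /= => /nbhs_ballP [d /= d0 Hd].
exists d => // y Iy yx yd.
have := Hd y; rewrite /ball /= => /(_ _) H.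
rewrite distrC; apply: H => //.
by rewrite distrC.
Qed.

Lemma mixt_diff L (pi : 'I_L -> R) (nu : 'I_L -> bool -> R) :
  mixt pi nu true - mixt pi nu false = \sum_(j < L) pi j * (nu j true - nu j false).
Proof. by rewrite /mixt -sumrB; apply: eq_bigr => j _; rewrite mulrBr. Qed.

Lemma prob_bounds (p : bool -> R) : is_prob p -> -1 <= p true - p false <= 1.
Proof.
move=> [p0]; rewrite big_bool /= => p1.
have := p0 true; have := p0 false => a b.
apply/andP; split; lra.
Qed.

Lemma M_in_I L (pi : 'I_L -> R) (nu : 'I_L -> bool -> R) : is_config nu -> (forall j, 0 <= pi j) ->
  \sum_(j < L) pi j = 1 -> @closed_unit_interval R (mixt pi nu true - mixt pi nu false).
Proof.
move=> cf p0 p1; rewrite /closed_unit_interval /= mixt_diff.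
apply/andP; split.
  apply: (le_trans (y := \sum_(j < L) pi j * -1)).
    by rewrite -mulr_suml p1 mul1r.
  apply: ler_sum => j _; rewrite ler_wpM2l //.
  by case/andP: (prob_bounds _ (cf j)).
apply: (le_trans (y := \sum_(j < L) pi j * 1)); last by rewrite -mulr_suml p1 mul1r.
apply: ler_sum => j _; rewrite ler_wpM2l //.
by case/andP: (prob_bounds _ (cf j)).
Qed.


Lemma first_order L (h pi : 'I_L -> R) (G G1 G2 : R -> R) (nu : 'I_L -> bool -> R) i :
  (forall j, 0 < pi j) -> \sum_(j < L) pi j = 1 -> C2_on (@closed_unit_interval R) G G1 G2 ->
  is_minimizer G h pi nu -> nu i = gibbs (h i) (G1 (mixt pi nu true - mixt pi nu false)).
Proof.
move=> pp p1 [Hd _] [cf Hmin].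
set M := mixt pi nu true - mixt pi nu false.
set g := G1 M.
set gam := gibbs (h i) g.
set p := nu i.
set D := (gam true - gam false) - (p true - p false).
set c := relent p gam.
have gp := gibbs_gt0 (h i) g.
have gprob := gibbs_prob (h i) g.
have c0 : 0 <= c := relent_ge0 _ _ (cf i) gprob gp.
have key : forall t, 0 < t -> t <= 1 ->
   @closed_unit_interval R (M + t * pi i * D) /\
   t * pi i * c <= G (M + t * pi i * D) - G M - t * pi i * g * D.
  move=> t t0 t1.
  pose pt := fun a => (1 - t) * p a + t * gam a.
  pose nut := fun j => if j == i then pt else nu j.
  have [pr0 pr1] := cf i; have [gr0 gr1] := gprob.
  move: pr1 gr1; rewrite !big_bool /= => pr1 gr1.
  have ptprob : is_prob pt.
    split.
      move=> a; rewrite /pt; apply: addr_ge0; apply: mulr_ge0;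
        first [lra | exact: pr0 | exact: gr0].
    rewrite big_bool /pt /=.
    transitivity ((1 - t) * (p true + p false) + t * (gam true + gam false)); first ring.
    by rewrite /p pr1 gr1; ring.
  have cfg : is_config nut.
    by move=> j; rewrite /nut; case: eqP => _ //; exact: cf.
  have mx : forall a, mixt pi nut a = mixt pi nu a + pi i * (pt a - p a).
    move=> a; rewrite /mixt (bigD1 i) //= [in RHS](bigD1 i) //= /nut eqxx.
    rewrite (eq_bigr (fun j => pi j * nu j a)); last by move=> j /negbTE ->.
    rewrite /p; ring.
  have Mt : mixt pi nut true - mixt pi nut false = M + t * pi i * D.
    rewrite !mx /M /D /pt; ring.
  split.
    rewrite -Mt; apply: M_in_I => // j; exact: ltW.
  have ent : \sum_(j < L) pi j * relent (nut j) (alpha (h j)) =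
     \sum_(j < L) pi j * relent (nu j) (alpha (h j)) +
     pi i * (relent pt (alpha (h i)) - relent p (alpha (h i))).
    rewrite (bigD1 i) //= [in RHS](bigD1 i) //= /nut eqxx.
    rewrite (eq_bigr (fun j => pi j * relent (nu j) (alpha (h j)))); last by move=> j /negbTE ->.
    rewrite /p; ring.
  have := Hmin nut cfg; rewrite /Phi /FIsing Mt ent -/M.
  have r1 := relent_gibbs _ (h i) g ptprob.
  have r2 := relent_gibbs _ (h i) g (cf i).
  have cv := relent_convex _ _ t (cf i) gp t0 t1.
  have cv' : pi i * relent pt gam <= pi i * ((1 - t) * c).
    by rewrite ler_wpM2l // ltW.
  have dpt : pt true - pt false = (p true - p false) + t * D by rewrite /pt /D; ring.
  rewrite -/p -/gam in r2.
  move: r1; rewrite -/gam dpt => r1.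
  have e1 : relent pt (alpha (h i)) = relent pt gam - ln (Zf (h i) g) - g * (p true - p false + t * D) by lra.
  have e2 : relent p (alpha (h i)) = c - ln (Zf (h i) g) - g * (p true - p false) by rewrite /c; lra.
  rewrite e1 e2.
  have ec : pi i * ((1 - t) * c) = pi i * c - t * pi i * c by ring.
  lra.
have MI0 : @closed_unit_interval R M by apply: M_in_I => // j; exact: ltW.
have cle : c <= 0.
  have [D0|Dn] := eqVneq D 0.
    have [_ k] := key 1 ltr01 (lexx 1).
    move: k; rewrite D0 !mulr0 addr0 subr0 subrr mul1r => k.
    have := pp i; nra.
  rewrite leNgt; apply/negP => cpos.
  have Dp : 0 < `|D| by rewrite normr_gt0.
  have pip := pp i.
  set e := c / (2 * `|D|).
  have e0 : 0 < e by rewrite /e divr_gt0 // mulr_gt0.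
  have [d d0 Hdd] := deriv_eps _ _ _ _ (Hd M MI0).1 _ e0.
  set t := Num.min 1 (d / (2 * (pi i * `|D|))).
  have t0 : 0 < t by rewrite /t lt_min ltr01 /= divr_gt0 // !mulr_gt0.
  have t1 : t <= 1 by rewrite /t ge_min lexx.
  have t2 : t <= d / (2 * (pi i * `|D|)) by rewrite /t ge_min lexx orbT.
  have [MI k] := key t t0 t1.
  set y := M + t * pi i * D in MI k.
  have yM : y - M = t * pi i * D by rewrite /y; ring.
  have ny : `|y - M| = t * pi i * `|D|.
    by rewrite yM !normrM (gtr0_norm t0) (gtr0_norm pip).
  have yn : y != M.
    by rewrite -subr_eq0 yM !mulf_neq0 // lt0r_neq0.
  have yd : `|y - M| < d.
    rewrite ny.
    have : t * (pi i * `|D|) <= d / (2 * (pi i * `|D|)) * (pi i * `|D|).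
      by rewrite ler_wpM2r // ?mulr_ge0 // ltW.
    have -> : d / (2 * (pi i * `|D|)) * (pi i * `|D|) = d / 2.
      by field; rewrite !lt0r_neq0.
    rewrite mulrA; lra.
  have Hq := Hdd y MI yn yd.
  set q := (G y - G M) / (y - M) in Hq.
  have Gq : G y - G M = q * (y - M) by rewrite /q divfK // subr_eq0.
  have bound : G y - G M - t * pi i * g * D <= e * (t * pi i * `|D|).
    have -> : G y - G M - t * pi i * g * D = (q - g) * (y - M) by rewrite Gq yM; ring.
    apply: (le_trans (ler_norm _)).
    rewrite normrM ny ler_wpM2r ?mulr_ge0 // ?ltW //.
  have ee : e * (t * pi i * `|D|) = t * pi i * c / 2.
    by rewrite /e; field; rewrite lt0r_neq0.
  have tpc : 0 < t * pi i * c by rewrite !mulr_gt0.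
  lra.
have c00 : c = 0 by apply/eqP; rewrite eq_le cle c0.
exact: relent_eq0 _ _ (cf i) gprob gp c00.
Qed.


Lemma Zf_exp hh g : Zf hh g =
  (expR hh * expR (- g) + expR (- hh) * expR g) / (expR hh + expR (- hh)).
Proof.
rewrite /Zf big_bool /alpha /spin /= !mulr1 !mulrN1 opprK.
have := expR_gt0 hh; have := expR_gt0 (- hh) => a b.
field; rewrite lt0r_neq0 //; exact: addr_gt0.
Qed.

Lemma mobius hi hj g g' : hi != hj ->
  ln (Zf hi g) - ln (Zf hj g) = ln (Zf hi g') - ln (Zf hj g') -> g = g'.
Proof.
move=> hne H.
have Zp := Zf_gt0.
rewrite -!ln_div ?posrE // in H.
have {}H := ln_inj (divr_gt0 (Zp _ _) (Zp _ _)) (divr_gt0 (Zp _ _) (Zp _ _)) H.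
move/eqP: H; rewrite eqr_div ?lt0r_neq0 // => /eqP H.
move: H; rewrite !Zf_exp.
set A := expR hi; set A' := expR (- hi); set Bj := expR hj; set Bj' := expR (- hj).
set b := expR (- g); set b' := expR g; set c := expR (- g'); set c' := expR g'.
have Ci : A + A' != 0 by rewrite lt0r_neq0 // addr_gt0 ?expR_gt0.
have Cj : Bj + Bj' != 0 by rewrite lt0r_neq0 // addr_gt0 ?expR_gt0.
move=> H.
have H2 : (A * b + A' * b') * (Bj * c + Bj' * c') = (A * c + A' * c') * (Bj * b + Bj' * b').
  have := f_equal (fun x => x * ((A + A') * (Bj + Bj'))) H.
  move=> H3; rewrite -[LHS]/((fun x => x) _).
  transitivity ((A * b + A' * b') / (A + A') * ((Bj * c + Bj' * c') / (Bj + Bj')) * ((A + A') * (Bj + Bj'))).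
    by field; rewrite Ci Cj.
  rewrite H3; by field; rewrite Ci Cj.
have H4 : (A * Bj' - A' * Bj) * (b * c' - c * b') = 0.
  rewrite -[RHS](subrr ((A * b + A' * b') * (Bj * c + Bj' * c'))) {2}H2; ring.
move/eqP: H4; rewrite mulf_eq0 !subr_eq0 => /orP [] /eqP E.
  exfalso; move/eqP: hne; apply.
  move: E; rewrite /A /A' /Bj /Bj' -!expRD => /expR_inj E; lra.
move: E; rewrite /b /b' /c /c' -!expRD => /expR_inj E; lra.
Qed.

Lemma Vval L (h pi : 'I_L -> R) (G G1 G2 : R -> R) (nu : 'I_L -> bool -> R) j :
  (forall j, 0 < pi j) -> \sum_(j < L) pi j = 1 -> C2_on (@closed_unit_interval R) G G1 G2 ->
  is_minimizer G h pi nu ->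
  relent (nu j) (alpha (h j)) + G1 (mixt pi nu true - mixt pi nu false) * (nu j true - nu j false)
   = - ln (Zf (h j) (G1 (mixt pi nu true - mixt pi nu false))).
Proof.
move=> pp p1 C2 mn.
have e := @first_order L h pi G G1 G2 nu j pp p1 C2 mn.
rewrite relent_gibbs; last by case: mn => cf _; exact: cf.
by rewrite [in relent _ _]e relent_self ?sub0r // => a; exact: gibbs_gt0.
Qed.

End S.

Lemma sum_dx (R : realType) L (i0 i1 : 'I_L) (f : 'I_L -> R) :
  \sum_(j < L) ((j == i0)%:R - (j == i1)%:R) * f j = f i0 - f i1.
Proof.
have d : forall k, \sum_(j < L) (j == k)%:R * f j = f k.
  move=> k; rewrite (bigD1 k) //= eqxx mul1r big1 ?addr0 // => j /negbTE ->.
  by rewrite mul0r.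
by rewrite -(d i0) -(d i1) -sumrB; apply: eq_bigr => j _; rewrite mulrBl.
Qed.

Theorem mainTheorem6 (R : realType) (L : nat) (h : 'I_L -> R) (pi : 'I_L -> R)
  (G G1 G2 : R -> R) :
  (2 <= L)%N ->
  injective h ->
  (forall i, 0 < pi i) -> \sum_(i < L) pi i = 1 ->
  C2_on (@closed_unit_interval R) G G1 G2 ->
  {in @closed_unit_interval R &, injective G1} ->
  forall (nu nu' : 'I_L -> bool -> R) (B B' : 'I_L -> R),
    is_minimizer G h pi nu -> is_minimizer G h pi nu' -> nu <> nu' ->
    is_stability_vector G1 h pi nu B -> is_stability_vector G1 h pi nu' B' ->
    B <> B'.
Proof.
move=> L2 hinj pp p1 C2 _ nu nu' B B' mn mn' nne [_ sB] [_ sB'] BB.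
subst B'.
have l0 : (0 < L)%N by apply: leq_trans L2.
pose i0 : 'I_L := Ordinal l0.
pose i1 : 'I_L := Ordinal L2.
pose x := fun j : 'I_L => ((j == i0)%:R - (j == i1)%:R : R).
have hx : \sum_(j < L) x j = 0.
  rewrite (eq_bigr (fun j => ((j == i0)%:R - (j == i1)%:R) * 1)); last by move=> j _; rewrite mulr1.
  by rewrite sum_dx subrr.
have E := sB x hx; rewrite sB' // in E.
move: E; rewrite /dFIsing /x !sum_dx.
have V0 := @Vval R L h pi G G1 G2 nu i0 pp p1 C2 mn.
have V1 := @Vval R L h pi G G1 G2 nu i1 pp p1 C2 mn.
have V0' := @Vval R L h pi G G1 G2 nu' i0 pp p1 C2 mn'.
have V1' := @Vval R L h pi G G1 G2 nu' i1 pp p1 C2 mn'.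
set g := G1 (mixt pi nu true - mixt pi nu false) in V0 V1 *.
set g' := G1 (mixt pi nu' true - mixt pi nu' false) in V0' V1' *.
move=> E.
have hne : h i0 != h i1.
  apply/eqP => /hinj /(congr1 val) /=; done.
have gg : g = g'.
  apply: (@mobius R _ _ _ _ hne); lra.
apply: nne; apply: funext => j.
rewrite (@first_order R L h pi G G1 G2 nu j pp p1 C2 mn).
rewrite (@first_order R L h pi G G1 G2 nu' j pp p1 C2 mn').
by rewrite -/g -/g' gg.
Qed.
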